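(* Let $n\in\mathbb N$, $B\in\mathcal S_n(\mathcal H)$, $w\in\mathbb C\setminus\mathbb R$, and let $V:=b_w(B)Q_w$ (a partial isometry on $\mathcal H$). Let $U$ on $\mathcal K\supseteq\mathcal H$ be the minimal unitary dilation of $V$, and let $P_*$ be the orthogonal projection onto $\mathcal K\ominus\overline{\mathrm{span}}\{U^kx:k\in\mathbb Z,\ x\in\ker(B^*-w)\}$. Then for every $h\in\mathcal H$, $$(1-P_* )h=\sum_{j=0}^\infty U^{-j}P_wV^jh .$$
   Context: For a separable Hilbert space $\mathcal H$ and $n\in\mathbb N$, $\mathcal S_n(\mathcal H)$ is the set of linear transformations $B$ with domain $\mathrm{dom}(B)\subseteq\mathcal H$ (not necessarily dense) that are symmetric, closed, simple ($\bigcap_{z\in\mathbb C\setminus\mathbb R}\mathrm{ran}(B-z)=\{0\}$) and have deficiency indices $(n,n)$. For $z\in\mathbb C\setminus\mathbb R$ write $\ker(B^*-z):=\mathrm{ran}(B-\bar z)^\perp$. $b_w(z)=\frac{z-w}{z-\bar w}$; $b_w(B)=(B-w)(B-\bar w)^{-1}$ is an isometry of $\mathrm{ran}(B-\bar w)$ onto $\mathrm{ran}(B-w)$. $Q_w$ is the orthogonal projection onto $\mathrm{ran}(B-\bar w)$ and $P_w=1-Q_w$. A unitary $U$ on $\mathcal K\supseteq\mathcal H$ is a unitary dilation of a contraction $T$ on $\mathcal H$ if $T^k=P_{\mathcal H}U^k|_{\mathcal H}$ for all $k\ge0$; it is minimal if $\mathcal K$ is the smallest $U$-reducing subspace containing $\mathcal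 H$. *)

(* Defs.v *)
From Stdlib Require Import Reals ZArith List Classical ClassicalEpsilon.
Open Scope R_scope.

Record Cx := mkC { Cre : R; Cim : R }.
Definition C0 : Cx := mkC 0 0.
Definition C1 : Cx := mkC 1 0.
Definition Ci : Cx := mkC 0 1.
Definition Cadd (a b : Cx) : Cx := mkC (Cre a + Cre b) (Cim a + Cim b).
Definition Cmul (a b : Cx) : Cx :=
  mkC (Cre a * Cre b - Cim a * Cim b) (Cre a * Cim b + Cim a * Cre b).
Definition Copp (a : Cx) : Cx := mkC (- Cre a) (- Cim a).
Definition Cconj (a : Cx) : Cx := mkC (Cre a) (- Cim a).

(* ---------- Complex Hilbert spaces ----------
   inner product linear in the first, conjugate-linear in the second argument. *)
Record Hilbert := {
  hcar :> Type;
  hzero : hcar;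
  hadd : hcar -> hcar -> hcar;
  hopp : hcar -> hcar;
  hscal : Cx -> hcar -> hcar;
  hinner : hcar -> hcar -> Cx;
  h_addA : forall x y z, hadd x (hadd y z) = hadd (hadd x y) z;
  h_addC : forall x y, hadd x y = hadd y x;
  h_add0 : forall x, hadd x hzero = x;
  h_addN : forall x, hadd x (hopp x) = hzero;
  h_scal1 : forall x, hscal C1 x = x;
  h_scalA : forall a b x, hscal a (hscal b x) = hscal (Cmul a b) x;
  h_scalDr : forall a x y, hscal a (hadd x y) = hadd (hscal a x) (hscal a y);
  h_scalDl : forall a b x, hscal (Cadd a b) x = hadd (hscal a x) (hscal b x);
  h_innerDl : forall x y z, hinner (hadd x y) z = Cadd (hinner x z) (hinner y z);
  h_innerZl : forall a x y, hinner (hscal a x) y = Cmul a (hinner x y);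
  h_innerC : forall x y, hinner y x = Cconj (hinner x y);
  h_inner_pos : forall x, Cim (hinner x x) = 0 /\ 0 <= Cre (hinner x x);
  h_inner_def : forall x, Cre (hinner x x) = 0 -> x = hzero;
  h_complete : forall u : nat -> hcar,
    (forall eps, eps > 0 -> exists N, forall m k, (m >= N)%nat -> (k >= N)%nat ->
        sqrt (Cre (hinner (hadd (u m) (hopp (u k))) (hadd (u m) (hopp (u k))))) < eps) ->
    exists l, forall eps, eps > 0 -> exists N, forall m, (m >= N)%nat ->
        sqrt (Cre (hinner (hadd (u m) (hopp l)) (hadd (u m) (hopp l)))) < eps
}.

Arguments hzero {h}.
Arguments hadd {h}.
Arguments hopp {h}.
Arguments hscal {h}.
Arguments hinner {h}.

Section HilbertDefs.
Variable H : Hilbert.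

Definition hsub (x y : H) : H := hadd x (hopp y).
Definition hnorm (x : H) : R := sqrt (Cre (hinner x x)).

Definition conv (u : nat -> H) (l : H) : Prop :=
  forall eps, eps > 0 -> exists N, forall m, (m >= N)%nat -> hnorm (hsub (u m) l) < eps.

Fixpoint psum (f : nat -> H) (N : nat) : H :=
  match N with O => hzero | S N' => hadd (psum f N') (f N') end.
Definition series_to (f : nat -> H) (s : H) : Prop := conv (psum f) s.

Definition separable : Prop :=
  exists d : nat -> H, forall x eps, eps > 0 -> exists k, hnorm (hsub x (d k)) < eps.

Definition orth (S : H -> Prop) : H -> Prop :=
  fun y => forall x, S x -> hinner x y = C0.

Definition lincomb (l : list (Cx * H)) : H :=
  fold_right (fun p acc => hadd (hscal (fst p) (snd p)) acc) hzero l.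
Definition span (S : H -> Prop) : H -> Prop :=
  fun v => exists l : list (Cx * H), Forall (fun p => S (snd p)) l /\ v = lincomb l.
Definition closure (S : H -> Prop) : H -> Prop :=
  fun v => forall eps, eps > 0 -> exists u, S u /\ hnorm (hsub v u) < eps.
Definition cspan (S : H -> Prop) : H -> Prop := closure (span S).

Definition closed_subspace (M : H -> Prop) : Prop :=
  M hzero /\ (forall x y, M x -> M y -> M (hadd x y)) /\
  (forall a x, M x -> M (hscal a x)) /\
  (forall u l, (forall k, M (u k)) -> conv u l -> M l).

Definition proj (M : H -> Prop) (x : H) : H :=
  epsilon (inhabits hzero) (fun p => M p /\ orth M (hsub x p)).

Definition has_dim (S : H -> Prop) (n : nat) : Prop :=
  exists e : nat -> H,
    (forall i j, (i < n)%nat -> (j < n)%nat ->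
       hinner (e i) (e j) = if Nat.eq_dec i j then C1 else C0) /\
    (forall v, S v <-> span (fun x => exists i, (i < n)%nat /\ x = e i) v).

(* ---------- linear transformations with domain (not necessarily dense) ----------
   A linear transformation is given by its domain dom and a function B : H -> H
   whose values are relevant only on dom. *)
Definition lin_op (dom : H -> Prop) (B : H -> H) : Prop :=
  dom hzero /\ (forall x y, dom x -> dom y -> dom (hadd x y)) /\
  (forall a x, dom x -> dom (hscal a x)) /\
  (forall x y, dom x -> dom y -> B (hadd x y) = hadd (B x) (B y)) /\
  (forall a x, dom x -> B (hscal a x) = hscal a (B x)).

Definition symmetric (dom : H -> Prop) (B : H -> H) : Prop :=
  forall x y, dom x -> dom y -> hinner (B x) y = hinner x (B y).

Definition closed_op (dom : H -> Prop) (B : H -> H) : Prop :=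
  forall (u : nat -> H) a b, (forall k, dom (u k)) -> conv u a ->
    conv (fun k => B (u k)) b -> dom a /\ B a = b.

Definition ran (dom : H -> Prop) (B : H -> H) (z : Cx) : H -> Prop :=
  fun y => exists x, dom x /\ y = hsub (B x) (hscal z x).

(* ker(B^* - z) := ran(B - conj z)^perp *)
Definition kerBstar (dom : H -> Prop) (B : H -> H) (z : Cx) : H -> Prop :=
  orth (ran dom B (Cconj z)).

Definition simple (dom : H -> Prop) (B : H -> H) : Prop :=
  forall v, (forall z, Cim z <> 0 -> ran dom B z v) -> v = hzero.

Definition deficiency (dom : H -> Prop) (B : H -> H) (n : nat) : Prop :=
  has_dim (kerBstar dom B Ci) n /\ has_dim (kerBstar dom B (Copp Ci)) n.

Definition in_Sn (n : nat) (dom : H -> Prop) (B : H -> H) : Prop :=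
  lin_op dom B /\ symmetric dom B /\ closed_op dom B /\ simple dom B /\ deficiency dom B n.

Definition Qw (dom : H -> Prop) (B : H -> H) (w : Cx) (x : H) : H :=
  proj (ran dom B (Cconj w)) x.
Definition Pw (dom : H -> Prop) (B : H -> H) (w : Cx) (x : H) : H :=
  hsub x (Qw dom B w x).

(* b_w(B) = (B - w)(B - conj w)^{-1} on ran(B - conj w) *)
Definition bwB (dom : H -> Prop) (B : H -> H) (w : Cx) (y : H) : H :=
  let x := epsilon (inhabits hzero)
             (fun x => dom x /\ y = hsub (B x) (hscal (Cconj w) x)) in
  hsub (B x) (hscal w x).

Definition Vw (dom : H -> Prop) (B : H -> H) (w : Cx) (x : H) : H :=
  bwB dom B w (Qw dom B w x).

End HilbertDefs.

Arguments hsub {H}.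
Arguments hnorm {H}.
Arguments conv {H}.
Arguments series_to {H}.
Arguments orth {H}.
Arguments cspan {H}.
Arguments closed_subspace {H}.
Arguments proj {H}.

Definition isom_embedding (H K : Hilbert) (iota : H -> K) : Prop :=
  (forall x y, iota (hadd x y) = hadd (iota x) (iota y)) /\
  (forall a x, iota (hscal a x) = hscal a (iota x)) /\
  (forall x y, hinner (iota x) (iota y) = hinner x y).

Definition unitary (K : Hilbert) (U Uinv : K -> K) : Prop :=
  (forall x y, U (hadd x y) = hadd (U x) (U y)) /\
  (forall a x, U (hscal a x) = hscal a (U x)) /\
  (forall x y, hinner (U x) (U y) = hinner x y) /\
  (forall x, U (Uinv x) = x) /\ (forall x, Uinv (U x) = x).

Fixpoint iterN {X : Type} (k : nat) (f : X -> X) (x : X) : X :=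
  match k with O => x | S k' => f (iterN k' f x) end.

Definition zpow {X : Type} (U Uinv : X -> X) (k : Z) (x : X) : X :=
  match k with
  | Z0 => x
  | Zpos p => iterN (Pos.to_nat p) U x
  | Zneg p => iterN (Pos.to_nat p) Uinv x
  end.

(* (K, iota, U) is a unitary dilation of the contraction T on H:
   T^k = P_H U^k |_H for all k >= 0 (H identified with iota H) *)
Definition unitary_dilation (H K : Hilbert) (iota : H -> K) (U Uinv : K -> K)
    (T : H -> H) : Prop :=
  isom_embedding H K iota /\ unitary K U Uinv /\
  forall (k : nat) (x y : H),
    hinner (iterN k U (iota x)) (iota y) = hinner (iterN k T x) y.

Definition minimal_unitary_dilation (H K : Hilbert) (iota : H -> K) (U Uinv : K -> K)
    (T : H -> H) : Prop :=
  unitary_dilation H K iota U Uinv T /\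
  forall M : K -> Prop, closed_subspace M ->
    (forall x, M x -> M (U x) /\ M (Uinv x)) ->
    (forall h, M (iota h)) -> forall y, M y.

(* Main.v *)
Require Import Defs.
From Stdlib Require Import Reals ZArith Lra Lia Psatz List Classical ClassicalEpsilon FunctionalExtensionality.
Open Scope R_scope.
Arguments h_addA {h}.
Arguments h_addC {h}.
Arguments h_add0 {h}.
Arguments h_addN {h}.
Arguments h_scal1 {h}.
Arguments h_scalA {h}.
Arguments h_scalDr {h}.
Arguments h_scalDl {h}.
Arguments h_innerDl {h}.
Arguments h_innerZl {h}.
Arguments h_innerC {h}.
Arguments h_inner_pos {h}.
Arguments h_inner_def {h}.
Arguments h_complete {h}.

Lemma Cx_ext (a b : Cx) : Cre a = Cre b -> Cim a = Cim b -> a = b.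
Proof. destruct a, b; simpl; intros -> ->; reflexivity. Qed.

Ltac cx := apply Cx_ext; simpl; try ring; try lra.

Definition nsq {H : Hilbert} (x : H) : R := Cre (hinner x x).

Lemma add0l {H : Hilbert} (x : H) : hadd hzero x = x.
Proof. rewrite h_addC; apply h_add0. Qed.

Lemma addNl {H : Hilbert} (x : H) : hadd (hopp x) x = hzero.
Proof. rewrite h_addC; apply h_addN. Qed.

Lemma add_cancel_l {H : Hilbert} (x y z : H) : hadd x y = hadd x z -> y = z.
Proof.
  intro E. rewrite <- (add0l y), <- (add0l z), <- (addNl x), <- !h_addA, E; reflexivity.
Qed.

Lemma opp_unique {H : Hilbert} (x y : H) : hadd x y = hzero -> y = hopp x.
Proof. intro E. apply (add_cancel_l x). rewrite E, h_addN; reflexivity. Qed.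

Lemma oppK {H : Hilbert} (x : H) : hopp (hopp x) = x.
Proof. symmetry; apply opp_unique, addNl. Qed.

Lemma opp0 {H : Hilbert} : hopp (@hzero H) = hzero.
Proof. symmetry; apply opp_unique, h_add0. Qed.

Lemma opp_add {H : Hilbert} (x y : H) : hopp (hadd x y) = hadd (hopp x) (hopp y).
Proof.
  symmetry; apply opp_unique.
  rewrite (h_addC (hopp x)), h_addA, <- (h_addA x y), h_addN, h_add0, h_addN; reflexivity.
Qed.

Lemma scal0 {H : Hilbert} (x : H) : hscal C0 x = hzero.
Proof.
  apply (add_cancel_l (hscal C0 x)). rewrite h_add0, <- h_scalDl.
  f_equal. cx.
Qed.

Lemma scalx0 {H : Hilbert} (a : Cx) : hscal a (@hzero H) = hzero.
Proof. rewrite <- (scal0 hzero), h_scalA. f_equal; cx. Qed.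

Lemma scal_m1 {H : Hilbert} (x : H) : hscal (mkC (-1) 0) x = hopp x.
Proof.
  apply opp_unique. rewrite <- (h_scal1 x) at 1. rewrite <- h_scalDl.
  rewrite <- (scal0 x). f_equal; cx.
Qed.

Lemma scalN {H : Hilbert} (a : Cx) (x : H) : hscal a (hopp x) = hopp (hscal a x).
Proof. rewrite <- !scal_m1, !h_scalA; f_equal; cx. Qed.

Lemma scal_add_sub {H : Hilbert} (a : Cx) (x y : H) : hscal a (hsub x y) = hsub (hscal a x) (hscal a y).
Proof. unfold hsub. rewrite h_scalDr, scalN; reflexivity. Qed.

Lemma sub_add_add {H : Hilbert} (a b c d : H) :
  hsub (hadd a b) (hadd c d) = hadd (hsub a c) (hsub b d).
Proof.
  unfold hsub. rewrite opp_add.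
  rewrite <- !h_addA. f_equal. rewrite !h_addA. f_equal. apply h_addC.
Qed.

Lemma subvv {H : Hilbert} (x : H) : hsub x x = hzero.
Proof. apply h_addN. Qed.

Lemma sub0r {H : Hilbert} (x : H) : hsub x hzero = x.
Proof. unfold hsub; rewrite opp0; apply h_add0. Qed.

Lemma sub_opp {H : Hilbert} (x y : H) : hsub y x = hopp (hsub x y).
Proof. unfold hsub. rewrite opp_add, oppK, h_addC; reflexivity. Qed.

Lemma sub_eq0 {H : Hilbert} (x y : H) : hsub x y = hzero -> x = y.
Proof. intro E. unfold hsub in E. apply opp_unique in E. rewrite <- (oppK y), E, oppK; reflexivity. Qed.

Lemma sub_split {H : Hilbert} (a b c : H) : hsub a b = hadd (hsub a c) (hsub c b).
Proof.
  unfold hsub. rewrite <- h_addA, (h_addA (hopp c)), addNl, add0l; reflexivity.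
Qed.

Lemma subK {H : Hilbert} (a b : H) : hadd (hsub a b) b = a.
Proof. unfold hsub. rewrite <- h_addA, addNl, h_add0; reflexivity. Qed.

Lemma addK {H : Hilbert} (a b : H) : hsub (hadd a b) b = a.
Proof. unfold hsub. rewrite <- h_addA, h_addN, h_add0; reflexivity. Qed.

Lemma sub_sub_same {H : Hilbert} (x p q : H) : hsub (hsub x q) (hsub x p) = hsub p q.
Proof.
  change (hsub (hadd x (hopp q)) (hadd x (hopp p)) = hsub p q).
  rewrite sub_add_add, subvv, add0l.
  unfold hsub. rewrite oppK, h_addC; reflexivity.
Qed.

Lemma conjK (a : Cx) : Cconj (Cconj a) = a.
Proof. cx. Qed.

Lemma inner_addr {H : Hilbert} (x y z : H) : hinner x (hadd y z) = Cadd (hinner x y) (hinner x z).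
Proof.
  rewrite h_innerC, h_innerDl, (h_innerC x y), (h_innerC x z). cx.
Qed.

Lemma inner_scalr {H : Hilbert} (a : Cx) (x y : H) : hinner x (hscal a y) = Cmul (Cconj a) (hinner x y).
Proof. rewrite h_innerC, h_innerZl, (h_innerC x y). cx. Qed.

Lemma inner0l {H : Hilbert} (y : H) : hinner hzero y = C0.
Proof.
  pose proof (h_innerDl hzero hzero y) as E. rewrite h_add0 in E.
  destruct (hinner hzero y) as [r i]. unfold Cadd in E; simpl in E. injection E; intros. cx.
Qed.

Lemma inner0r {H : Hilbert} (y : H) : hinner y hzero = C0.
Proof. rewrite h_innerC, inner0l. cx. Qed.

Lemma inner_oppl {H : Hilbert} (x y : H) : hinner (hopp x) y = Copp (hinner x y).
Proof. rewrite <- scal_m1, h_innerZl. cx. Qed.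

Lemma inner_oppr {H : Hilbert} (x y : H) : hinner y (hopp x) = Copp (hinner y x).
Proof. rewrite <- scal_m1, inner_scalr. cx. Qed.

Lemma inner_subl {H : Hilbert} (x y z : H) : hinner (hsub x y) z = Cadd (hinner x z) (Copp (hinner y z)).
Proof. unfold hsub. rewrite h_innerDl, inner_oppl; reflexivity. Qed.

Lemma inner_subr {H : Hilbert} (x y z : H) : hinner z (hsub x y) = Cadd (hinner z x) (Copp (hinner z y)).
Proof. unfold hsub. rewrite inner_addr, inner_oppr; reflexivity. Qed.

Lemma nsq_nonneg {H : Hilbert} (x : H) : 0 <= nsq x.
Proof. apply h_inner_pos. Qed.

Lemma im_self {H : Hilbert} (x : H) : Cim (hinner x x) = 0.
Proof. apply h_inner_pos. Qed.

Lemma nsq_add {H : Hilbert} (a b : H) : nsq (hadd a b) = nsq a + nsq b + 2 * Cre (hinner a b).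
Proof.
  unfold nsq. rewrite h_innerDl, !inner_addr. rewrite (h_innerC b a). simpl. ring.
Qed.

Lemma nsq_opp {H : Hilbert} (a : H) : nsq (hopp a) = nsq a.
Proof. unfold nsq. rewrite inner_oppl, inner_oppr. simpl. ring. Qed.

Lemma nsq_sub {H : Hilbert} (a b : H) : nsq (hsub a b) = nsq a + nsq b - 2 * Cre (hinner a b).
Proof. unfold hsub. rewrite nsq_add, nsq_opp, inner_oppr. simpl. ring. Qed.

Lemma nsq_sub_sym {H : Hilbert} (a b : H) : nsq (hsub a b) = nsq (hsub b a).
Proof. rewrite (sub_opp a b), nsq_opp; reflexivity. Qed.

Lemma nsq_scal {H : Hilbert} (c : Cx) (a : H) : nsq (hscal c a) = (Cre c * Cre c + Cim c * Cim c) * nsq a.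
Proof.
  unfold nsq. rewrite h_innerZl, inner_scalr. pose proof (im_self a).
  destruct (hinner a a) as [r i]; simpl in *. subst. ring.
Qed.

Lemma nsq_zero {H : Hilbert} (a : H) : nsq a = 0 -> a = hzero.
Proof. apply h_inner_def. Qed.

Lemma nsq0 {H : Hilbert} : nsq (@hzero H) = 0.
Proof. unfold nsq. rewrite inner0l. reflexivity. Qed.

Lemma nsq_add_le {H : Hilbert} (a b : H) : nsq (hadd a b) <= 2 * nsq a + 2 * nsq b.
Proof.
  pose proof (nsq_add a b). pose proof (nsq_sub a b). pose proof (nsq_nonneg (hsub a b)). lra.
Qed.

Lemma re_scal_real {H : Hilbert} (t : R) (a b : H) : Cre (hinner a (hscal (mkC t 0) b)) = t * Cre (hinner a b).
Proof. rewrite inner_scalr. simpl. ring. Qed.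

Lemma CS_re {H : Hilbert} (a b : H) : Cre (hinner a b) * Cre (hinner a b) <= nsq a * nsq b.
Proof.
  set (c := Cre (hinner a b)).
  destruct (Req_dec (nsq b) 0) as [Hb|Hb].
  - apply nsq_zero in Hb. subst c. rewrite Hb, inner0r. simpl. rewrite nsq0. lra.
  - pose proof (nsq_nonneg b).
    assert (Hpos : 0 < nsq b) by lra.
    set (t := - c / nsq b).
    pose proof (nsq_nonneg (hadd a (hscal (mkC t 0) b))) as N.
    rewrite nsq_add, nsq_scal, re_scal_real in N. simpl in N. fold c in N.
    assert (Ht : t * nsq b = - c) by (unfold t; field; lra).
    assert (N2 : 0 <= nsq a + t * c).
    { replace (nsq a + t * c) with (nsq a + (t * t + 0 * 0) * nsq b + 2 * (t * c)); [lra|].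
      replace ((t * t + 0 * 0) * nsq b) with (t * (t * nsq b)) by ring. rewrite Ht. ring. }
    assert (0 <= (nsq a + t * c) * nsq b) by (apply Rmult_le_pos; lra).
    replace ((nsq a + t * c) * nsq b) with (nsq a * nsq b + c * (t * nsq b)) in H1 by ring.
    rewrite Ht in H1. lra.
Qed.

Lemma hnorm_sq {H : Hilbert} (a : H) : hnorm a = sqrt (nsq a).
Proof. reflexivity. Qed.

Lemma hnorm_nonneg {H : Hilbert} (a : H) : 0 <= hnorm a.
Proof. apply sqrt_pos. Qed.

Lemma CS_re_abs {H : Hilbert} (a b : H) : Rabs (Cre (hinner a b)) <= hnorm a * hnorm b.
Proof.
  rewrite <- sqrt_Rsqr_abs. unfold hnorm. rewrite <- sqrt_mult_alt by apply nsq_nonneg.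
  apply sqrt_le_1_alt. apply CS_re.
Qed.

Lemma CS_im_abs {H : Hilbert} (a b : H) : Rabs (Cim (hinner a b)) <= hnorm a * hnorm b.
Proof.
  pose proof (CS_re_abs (hscal Ci a) b) as E.
  rewrite h_innerZl in E. unfold hnorm in E at 1. fold (nsq (hscal Ci a)) in E. rewrite nsq_scal in E. simpl in E.
  replace ((0 * 0 + 1 * 1) * nsq a) with (nsq a) in E by ring.
  replace (0 * Cre (hinner a b) - 1 * Cim (hinner a b)) with (- Cim (hinner a b)) in E by ring.
  rewrite Rabs_Ropp in E. exact E.
Qed.

Lemma hnorm_lt {H : Hilbert} (a : H) eps : 0 < eps -> nsq a < eps * eps -> hnorm a < eps.
Proof.
  intros He Hn. unfold hnorm. rewrite <- (sqrt_square eps) by lra.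
  apply sqrt_lt_1_alt. split; [apply nsq_nonneg | exact Hn].
Qed.

Lemma hnorm_lt_inv {H : Hilbert} (a : H) eps : hnorm a < eps -> nsq a < eps * eps.
Proof.
  intro Hn. pose proof (hnorm_nonneg a). unfold hnorm in *.
  pose proof (sqrt_sqrt (nsq a) (nsq_nonneg a)) as E. fold (nsq a) in *. nra.
Qed.

Lemma hnorm_sub_sym {H : Hilbert} (a b : H) : hnorm (hsub a b) = hnorm (hsub b a).
Proof. unfold hnorm. fold (nsq (hsub a b)). fold (nsq (hsub b a)). rewrite nsq_sub_sym; reflexivity. Qed.


Definition convq {H : Hilbert} (u : nat -> H) (l : H) : Prop :=
  forall eps, 0 < eps -> exists N, forall m, (m >= N)%nat -> nsq (hsub (u m) l) < eps.
Definition cauchyq {H : Hilbert} (u : nat -> H) : Prop :=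
  forall eps, 0 < eps -> exists N, forall m k, (m >= N)%nat -> (k >= N)%nat -> nsq (hsub (u m) (u k)) < eps.

Lemma conv_convq {H : Hilbert} (u : nat -> H) l : conv u l -> convq u l.
Proof.
  intros C eps He. destruct (C (sqrt eps) (sqrt_lt_R0 _ He)) as [N HN]. exists N. intros m Hm.
  specialize (HN m Hm). apply hnorm_lt_inv in HN. rewrite sqrt_sqrt in HN by lra. exact HN.
Qed.

Lemma convq_conv {H : Hilbert} (u : nat -> H) l : convq u l -> conv u l.
Proof.
  intros C eps He. destruct (C (eps * eps)) as [N HN]; [nra|]. exists N. intros m Hm.
  apply hnorm_lt; [lra|]. apply HN, Hm.
Qed.

Lemma complete {H : Hilbert} (u : nat -> H) : cauchyq u -> exists l, convq u l.
Proof.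
  intro C. destruct (h_complete u) as [l Hl].
  - intros eps He. destruct (C (eps * eps)) as [N HN]; [nra|]. exists N. intros m k Hm Hk.
    apply (hnorm_lt (hsub (u m) (u k))); [lra|]. apply HN; assumption.
  - exists l. apply conv_convq. exact Hl.
Qed.

Lemma convq_add {H : Hilbert} (u v : nat -> H) a b : convq u a -> convq v b ->
  convq (fun k => hadd (u k) (v k)) (hadd a b).
Proof.
  intros Cu Cv eps He. destruct (Cu (eps/4)) as [N1 H1]; [lra|]. destruct (Cv (eps/4)) as [N2 H2]; [lra|].
  exists (max N1 N2). intros m Hm. rewrite sub_add_add.
  pose proof (nsq_add_le (hsub (u m) a) (hsub (v m) b)).
  pose proof (H1 m ltac:(lia)). pose proof (H2 m ltac:(lia)). lra.
Qed.

Lemma convq_scal {H : Hilbert} (c : Cx) (u : nat -> H) a : convq u a ->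
  convq (fun k => hscal c (u k)) (hscal c a).
Proof.
  intros Cu eps He. set (K := Cre c * Cre c + Cim c * Cim c).
  assert (0 <= K) by (unfold K; nra).
  destruct (Cu (eps / (K + 1))) as [N HN]. { apply Rdiv_lt_0_compat; lra. }
  exists N. intros m Hm. rewrite <- scal_add_sub, nsq_scal. fold K.
  pose proof (HN m Hm). pose proof (nsq_nonneg (hsub (u m) a)).
  apply Rle_lt_trans with ((K + 1) * nsq (hsub (u m) a)); [nra|].
  apply (Rmult_lt_compat_l (K+1)) in H1; [|lra].
  replace ((K + 1) * (eps / (K + 1))) with eps in H1 by (field; lra). exact H1.
Qed.

Lemma convq_cauchy {H : Hilbert} (u : nat -> H) a : convq u a -> cauchyq u.
Proof.
  intros Cu eps He. destruct (Cu (eps/4)) as [N HN]; [lra|]. exists N. intros m k Hm Hk.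
  rewrite (sub_split (u m) (u k) a). pose proof (nsq_add_le (hsub (u m) a) (hsub a (u k))).
  rewrite (nsq_sub_sym a) in H0. pose proof (HN m Hm). pose proof (HN k Hk). lra.
Qed.

Lemma small_zero (x : R) : (forall eps, 0 < eps -> Rabs x < eps) -> x = 0.
Proof.
  intro Hs. destruct (Req_dec x 0) as [|Hx]; [assumption|].
  exfalso. pose proof (Rabs_pos_lt x Hx). specialize (Hs (Rabs x) H). lra.
Qed.

Lemma inner_approx {H : Hilbert} (v r : H) :
  (forall eps, 0 < eps -> exists u, hinner u r = C0 /\ hnorm (hsub v u) < eps) -> hinner v r = C0.
Proof.
  intro A.
  assert (forall eps, 0 < eps -> Rabs (Cre (hinner v r)) < eps /\ Rabs (Cim (hinner v r)) < eps).
  { intros eps He. pose proof (hnorm_nonneg r).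
    destruct (A (eps / (hnorm r + 1))) as [u [Hu Hn]]. { apply Rdiv_lt_0_compat; lra. }
    assert (E : hinner v r = hinner (hsub v u) r).
    { rewrite inner_subl, Hu. cx. }
    pose proof (hnorm_nonneg (hsub v u)).
    assert (HH : hnorm (hsub v u) * hnorm r < eps).
    { apply Rle_lt_trans with (hnorm (hsub v u) * (hnorm r + 1)); [nra|].
      apply (Rmult_lt_compat_r (hnorm r + 1)) in Hn; [|lra].
      replace (eps / (hnorm r + 1) * (hnorm r + 1)) with eps in Hn by (field; lra). exact Hn. }
    rewrite E. split.
    - eapply Rle_lt_trans; [apply CS_re_abs|]. exact HH.
    - eapply Rle_lt_trans; [apply CS_im_abs|]. exact HH. }
  apply Cx_ext; simpl; apply small_zero; intros eps He; apply (H0 eps He).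
Qed.

Lemma inner_lim {H : Hilbert} (a : H) (u : nat -> H) r N0 :
  (forall N, (N >= N0)%nat -> hinner a (u N) = C0) -> convq u r -> hinner a r = C0.
Proof.
  intros Z Cu. rewrite h_innerC.
  assert (hinner r a = C0) as ->.
  { apply inner_approx. intros eps He. destruct (Cu (eps * eps)) as [N HN]; [nra|].
    exists (u (max N N0)). split.
    - rewrite h_innerC, Z by lia. cx.
    - rewrite hnorm_sub_sym. apply hnorm_lt; [lra|]. apply HN. lia. }
  cx.
Qed.

Lemma orth_sub {H : Hilbert} (S : H -> Prop) a b : orth S a -> orth S b -> orth S (hsub a b).
Proof. intros Ha Hb x Hx. rewrite inner_subr, Ha, Hb by exact Hx. cx. Qed.

Lemma proj_unique {H : Hilbert} (M : H -> Prop)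
  (Hs : forall a b, M a -> M b -> M (hsub a b)) x p :
  M p -> orth M (hsub x p) -> proj M x = p.
Proof.
  intros Mp Op. unfold proj.
  pose proof (epsilon_spec (inhabits hzero) (fun q => M q /\ orth M (hsub x q)) (ex_intro _ p (conj Mp Op))) as Hq.
  set (q := epsilon _ _) in *. destruct Hq as [Mq Oq].
  apply sub_eq0. apply nsq_zero.
  assert (M (hsub q p)) as Md by (apply Hs; assumption).
  assert (orth M (hsub q p)) as Od.
  { rewrite <- (sub_sub_same x q p). apply orth_sub; assumption. }
  unfold nsq. rewrite (Od _ Md). reflexivity.
Qed.

Lemma proj_spec {H : Hilbert} (M : H -> Prop) x :
  (exists p, M p /\ orth M (hsub x p)) -> M (proj M x) /\ orth M (hsub x (proj M x)).
Proof.
  intro E. unfold proj. apply (epsilon_spec (inhabits hzero) (fun q => M q /\ orth M (hsub x q))). exact E.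
Qed.


Lemma inv_small (e : R) : 0 < e -> exists N, forall k, (k >= N)%nat -> / INR (S k) < e.
Proof.
  intro He. destruct (archimed_cor1 e He) as [N [HN HN0]]. exists N. intros k Hk.
  eapply Rle_lt_trans; [|exact HN]. apply Rinv_le_contravar.
  - apply lt_0_INR; lia.
  - apply le_INR; lia.
Qed.

Lemma sub_add_r {H : Hilbert} (x a b : H) : hsub x (hadd a b) = hadd (hsub x a) (hopp b).
Proof. unfold hsub. rewrite opp_add, h_addA. reflexivity. Qed.

Lemma opp_scal_real {H : Hilbert} (t : R) (m : H) : hopp (hscal (mkC t 0) m) = hscal (mkC (-t) 0) m.
Proof. rewrite <- scal_m1, h_scalA. f_equal. cx. Qed.

Lemma scal2 {H : Hilbert} (x : H) : hscal (mkC 2 0) x = hadd x x.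
Proof. rewrite <- (h_scal1 x) at 2 3. rewrite <- h_scalDl. f_equal. cx. Qed.

Lemma subspace_sub {H : Hilbert} (M : H -> Prop) : closed_subspace M ->
  forall a b, M a -> M b -> M (hsub a b).
Proof.
  intros [H0 [Ha [Hs Hc]]] a b A B. unfold hsub. apply Ha; [exact A|].
  rewrite <- scal_m1. apply Hs, B.
Qed.

Lemma re_zero_orth {H : Hilbert} (M : H -> Prop) (Hs : forall a x, M x -> M (hscal a x)) (y : H) :
  (forall m, M m -> Cre (hinner y m) = 0) -> orth M y.
Proof.
  intros R m Hm. rewrite h_innerC.
  pose proof (R m Hm) as R1. pose proof (R (hscal Ci m) (Hs _ _ Hm)) as R2.
  rewrite inner_scalr in R2. simpl in R2.
  apply Cx_ext; simpl; lra.
Qed.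

Lemma quad_zero (c A : R) : 0 <= A -> (forall t, 2 * t * c <= t * t * A) -> c = 0.
Proof.
  intros HA Ht. specialize (Ht (c / (A + 2))).
  assert (E1 : 2 * (c / (A + 2)) * c = 2 * c * c / (A + 2)) by (field; lra).
  assert (E2 : c / (A + 2) * (c / (A + 2)) * A = c * c * A / ((A + 2) * (A+2))) by (field; lra).
  rewrite E1, E2 in Ht.
  assert (Hp : 0 < A + 2) by lra.
  apply (Rmult_le_compat_r ((A+2)*(A+2))) in Ht; [|nra].
  replace (2 * c * c / (A + 2) * ((A + 2) * (A + 2))) with (2 * c * c * (A + 2)) in Ht by (field; lra).
  replace (c * c * A / ((A + 2) * (A + 2)) * ((A + 2) * (A + 2))) with (c * c * A) in Ht by (field; lra).
  nra.
Qed.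

Lemma proj_exists {H : Hilbert} (M : H -> Prop) : closed_subspace M ->
  forall x, exists p, M p /\ orth M (hsub x p).
Proof.
  intros HM x. pose proof HM as [M0 [Madd [Mscal Mcl]]].
  set (E := fun r => exists m, M m /\ r = - nsq (hsub x m)).
  assert (Eb : bound E).
  { exists 0. intros r [m [_ ->]]. pose proof (nsq_nonneg (hsub x m)). lra. }
  assert (Ene : exists r, E r) by (exists (- nsq (hsub x hzero)); exists hzero; split; auto).
  destruct (completeness E Eb Ene) as [L [Lub Lleast]].
  set (d := - L).
  assert (F1 : forall m, M m -> d <= nsq (hsub x m)).
  { intros m Hm. assert (E (- nsq (hsub x m))) by (exists m; auto). apply Lub in H0. unfold d. lra. }
  assert (F2 : forall k : nat, exists m, M m /\ nsq (hsub x m) < d + / INR (S k)).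
  { intro k. apply NNPP. intro Hn.
    assert (is_upper_bound E (L - / INR (S k))).
    { intros r [m [Hm ->]]. destruct (Rle_or_lt (d + / INR (S k)) (nsq (hsub x m))) as [h|h].
      - unfold d in h. lra.
      - exfalso. apply Hn. exists m. auto. }
    apply Lleast in H0. assert (0 < / INR (S k)) by (apply Rinv_0_lt_compat, lt_0_INR; lia). lra. }
  assert (F3 : forall k : nat, {m | M m /\ nsq (hsub x m) < d + / INR (S k)}).
  { intro k. apply constructive_indefinite_description. apply F2. }
  set (mk := fun k => proj1_sig (F3 k)).
  assert (Mk : forall k, M (mk k)) by (intro k; unfold mk; destruct (F3 k); simpl; tauto).
  assert (Dk : forall k, nsq (hsub x (mk k)) < d + / INR (S k)) by (intro k; unfold mk; destruct (F3 k); simpl; tauto).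
  assert (Par : forall k l, nsq (hsub (mk l) (mk k)) <= 2 * / INR (S k) + 2 * / INR (S l)).
  { intros k l.
    set (a := hsub x (mk k)). set (b := hsub x (mk l)).
    set (mid := hscal (mkC (/2) 0) (hadd (mk k) (mk l))).
    assert (Mm : M mid) by (apply Mscal, Madd; auto).
    assert (Eab : hadd a b = hscal (mkC 2 0) (hsub x mid)).
    { unfold mid. rewrite scal_add_sub, h_scalA, scal2.
      assert (Ec1 : Cmul (mkC 2 0) (mkC (/ 2) 0) = Defs.C1) by (apply Cx_ext; simpl; field).
      rewrite Ec1.
      rewrite h_scal1. unfold a, b. rewrite sub_add_add. reflexivity. }
    pose proof (nsq_add a b) as N1. pose proof (nsq_sub a b) as N2.
    rewrite Eab, nsq_scal in N1. simpl in N1.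
    unfold a, b in N2. rewrite sub_sub_same in N2.
    pose proof (F1 _ Mm). pose proof (Dk k). pose proof (Dk l). fold a b in H1, H2.
    fold a b in N2. lra. }
  assert (Cm : cauchyq mk).
  { intros eps He. destruct (inv_small (eps / 4)) as [N HN]; [lra|]. exists N. intros m k Hm Hk.
    pose proof (Par k m). pose proof (HN m Hm). pose proof (HN k Hk). lra. }
  destruct (complete mk Cm) as [p Hp].
  exists p. split.
  { apply (Mcl mk p Mk). apply convq_conv, Hp. }
  apply re_zero_orth; [exact Mscal|].
  intros m Hm. set (c := Cre (hinner (hsub x p) m)). set (A := nsq m).
  apply (quad_zero c A (nsq_nonneg m)).
  intro t.
  assert (Key : forall k, 2 * t * Cre (hinner (hsub x (mk k)) m) <= / INR (S k) + t * t * A).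
  { intro k. assert (Mt : M (hadd (mk k) (hscal (mkC t 0) m))) by (apply Madd; auto).
    pose proof (F1 _ Mt) as G. rewrite sub_add_r, opp_scal_real, nsq_add, nsq_scal, re_scal_real in G.
    simpl in G. pose proof (Dk k). fold A in G. lra. }
  apply Rnot_lt_le. intro Hlt.
  set (eps := 2 * t * c - t * t * A). assert (He : 0 < eps) by (unfold eps; lra).
  pose proof (hnorm_nonneg m) as Hm0.
  set (K := 2 * Rabs t * hnorm m + 1).
  assert (HK : 0 < K) by (unfold K; pose proof (Rabs_pos t); nra).
  destruct (inv_small (eps / 2)) as [N1 HN1]; [lra|].
  destruct (Hp ((eps / (2 * K)) * (eps / (2 * K)))) as [N2 HN2].
  { assert (0 < eps / (2 * K)) by (apply Rdiv_lt_0_compat; lra). nra. }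
  set (k := max N1 N2).
  pose proof (Key k) as Kk. pose proof (HN1 k ltac:(lia)) as I1.
  pose proof (HN2 k ltac:(lia)) as I2. apply hnorm_lt in I2; [|apply Rdiv_lt_0_compat; lra].
  assert (Ec : c = Cre (hinner (hsub x (mk k)) m) + Cre (hinner (hsub (mk k) p) m)).
  { unfold c. rewrite (sub_split x p (mk k)), h_innerDl. simpl. reflexivity. }
  set (e := Cre (hinner (hsub (mk k) p) m)) in Ec.
  set (ck := Cre (hinner (hsub x (mk k)) m)) in Ec, Kk.
  set (hn := hnorm (hsub (mk k) p)) in I2.
  assert (Ee : Rabs e <= hn * hnorm m) by apply CS_re_abs.
  assert (Te : t * e <= Rabs t * Rabs e) by (rewrite <- Rabs_mult; apply Rle_abs).
  pose proof (Rabs_pos t). pose proof (Rabs_pos e). pose proof (hnorm_nonneg (hsub (mk k) p)) as Hn0. fold hn in Hn0.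
  assert (T1 : Rabs t * Rabs e <= Rabs t * (hn * hnorm m)) by (apply Rmult_le_compat_l; lra).
  assert (T2 : 2 * Rabs t * hnorm m * hn <= K * hn) by (unfold K; nra).
  assert (T3 : K * hn < eps / 2).
  { apply (Rmult_lt_compat_l K) in I2; [|lra].
    replace (K * (eps / (2 * K))) with (eps / 2) in I2 by (field; lra). exact I2. }
  assert (2 * t * c < t * t * A + eps) by (rewrite Ec; nra).
  unfold eps in H2. lra.
Qed.


Lemma sub_sub_sub {H : Hilbert} (a b c d : H) : hsub (hsub a c) (hsub b d) = hsub (hsub a b) (hsub c d).
Proof.
  change (hsub (hadd a (hopp c)) (hadd b (hopp d)) = hsub (hsub a b) (hsub c d)).
  rewrite sub_add_add. unfold hsub at 2 4. rewrite <- (oppK (hadd (hopp c) (hopp (hopp d)))).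
  rewrite opp_add, !oppK. reflexivity.
Qed.

Lemma add_sub_sub {H : Hilbert} (a b c d : H) : hadd (hsub a b) (hsub c d) = hsub (hadd a c) (hadd b d).
Proof. rewrite sub_add_add. reflexivity. Qed.

Lemma scal_comm {H : Hilbert} (a c : Cx) (x : H) : hscal a (hscal c x) = hscal c (hscal a x).
Proof. rewrite !h_scalA. f_equal. cx. Qed.

Lemma lin_dom0 {H : Hilbert} dom (B : H -> H) : lin_op H dom B -> dom hzero.
Proof. intros [h _]; exact h. Qed.

Lemma lin_B0 {H : Hilbert} dom (B : H -> H) : lin_op H dom B -> B hzero = hzero.
Proof.
  intros L. pose proof L as [D0 [_ [_ [Ba _]]]].
  specialize (Ba hzero hzero D0 D0). rewrite h_add0 in Ba.
  apply (add_cancel_l (B hzero)). rewrite h_add0. symmetry. exact Ba.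
Qed.

Lemma lin_dom_sub {H : Hilbert} dom (B : H -> H) : lin_op H dom B ->
  forall x y, dom x -> dom y -> dom (hsub x y).
Proof.
  intros [_ [Da [Ds _]]] x y Dx Dy. unfold hsub. apply Da; auto. rewrite <- scal_m1. apply Ds, Dy.
Qed.

Lemma lin_B_sub {H : Hilbert} dom (B : H -> H) : lin_op H dom B ->
  forall x y, dom x -> dom y -> B (hsub x y) = hsub (B x) (B y).
Proof.
  intros [_ [Da [Ds [Ba Bs]]]] x y Dx Dy. unfold hsub.
  rewrite <- !scal_m1. rewrite Ba; auto. rewrite Bs; auto.
Qed.

Definition Tc {H : Hilbert} (B : H -> H) (c : Cx) (x : H) : H := hsub (B x) (hscal c x).

Lemma Tc_sub {H : Hilbert} dom (B : H -> H) c : lin_op H dom B ->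
  forall x y, dom x -> dom y -> Tc B c (hsub x y) = hsub (Tc B c x) (Tc B c y).
Proof.
  intros L x y Dx Dy. unfold Tc. rewrite (lin_B_sub dom B L) by auto. rewrite scal_add_sub.
  symmetry. apply sub_sub_sub.
Qed.

Lemma sym_im {H : Hilbert} dom (B : H -> H) : symmetric H dom B -> forall x, dom x -> Cim (hinner (B x) x) = 0.
Proof.
  intros S x Dx. pose proof (S x x Dx Dx) as E. rewrite (h_innerC (B x) x) in E.
  destruct (hinner (B x) x) as [r i]. unfold Cconj in E. simpl in *. injection E. lra.
Qed.

Lemma T_formula {H : Hilbert} dom (B : H -> H) : symmetric H dom B -> forall c x, dom x ->
  nsq (Tc B c x) = nsq (Tc B (mkC (Cre c) 0) x) + Cim c * Cim c * nsq x.
Proof.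
  intros S c x Dx. unfold Tc.
  assert (Ec : hscal c x = hadd (hscal (mkC (Cre c) 0) x) (hscal (mkC 0 (Cim c)) x)).
  { rewrite <- h_scalDl. f_equal. destruct c; cx. }
  rewrite Ec, sub_add_r, nsq_add, nsq_opp, nsq_scal, inner_oppr, inner_scalr.
  rewrite inner_subl, h_innerZl. simpl. rewrite (sym_im dom B S x Dx). pose proof (im_self x). unfold nsq. nra.
Qed.

Lemma T_lower {H : Hilbert} dom (B : H -> H) : symmetric H dom B -> forall c x, dom x ->
  Cim c * Cim c * nsq x <= nsq (Tc B c x).
Proof.
  intros S c x Dx. rewrite (T_formula dom B S c x Dx). pose proof (nsq_nonneg (Tc B (mkC (Cre c) 0) x)). lra.
Qed.

Lemma ran_subspace {H : Hilbert} dom (B : H -> H) c :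
  lin_op H dom B -> symmetric H dom B -> closed_op H dom B -> Cim c <> 0 ->
  closed_subspace (ran H dom B c).
Proof.
  intros L S Cl Hc. pose proof L as [D0 [Da [Ds [Ba Bs]]]].
  split; [|split; [|split]].
  - exists hzero. split; auto. rewrite (lin_B0 dom B L), scalx0, subvv. reflexivity.
  - intros y1 y2 [x1 [D1 ->]] [x2 [D2 ->]]. exists (hadd x1 x2). split; auto.
    rewrite Ba, h_scalDr by auto. apply add_sub_sub.
  - intros a y [x [Dx ->]]. exists (hscal a x). split; auto.
    rewrite Bs by auto. rewrite scal_add_sub, scal_comm. reflexivity.
  - intros u l Hu Cu.
    assert (Fx : forall k, {x | dom x /\ u k = Tc B c x}).
    { intro k. apply constructive_indefinite_description. apply (Hu k). }
    set (xs := fun k => proj1_sig (Fx k)).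
    assert (Dxs : forall k, dom (xs k)) by (intro k; unfold xs; destruct (Fx k); simpl; tauto).
    assert (Exs : forall k, u k = Tc B c (xs k)) by (intro k; unfold xs; destruct (Fx k); simpl; tauto).
    apply conv_convq in Cu.
    pose proof (convq_cauchy u l Cu) as Cau.
    assert (Hpos : 0 < Cim c * Cim c) by (apply Rsqr_pos_lt in Hc; unfold Rsqr in Hc; exact Hc).
    assert (Cx_ : cauchyq xs).
    { intros eps He. destruct (Cau (eps * (Cim c * Cim c))) as [N HN]; [nra|]. exists N. intros m k Hm Hk.
      pose proof (HN m k Hm Hk) as E. rewrite !Exs, <- (Tc_sub dom B c L) in E by auto.
      pose proof (T_lower dom B S c (hsub (xs m) (xs k)) (lin_dom_sub dom B L _ _ (Dxs m) (Dxs k))).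
      nra. }
    destruct (complete xs Cx_) as [x Hx].
    assert (CB : convq (fun k => B (xs k)) (hadd l (hscal c x))).
    { assert (E : (fun k => B (xs k)) = (fun k => hadd (u k) (hscal c (xs k)))).
      { apply functional_extensionality. intro k. rewrite Exs. unfold Tc. rewrite subK. reflexivity. }
      rewrite E. apply convq_add; [exact Cu|]. apply convq_scal, Hx. }
    destruct (Cl xs x (hadd l (hscal c x)) Dxs (convq_conv _ _ Hx) (convq_conv _ _ CB)) as [Dx EB].
    exists x. split; auto. rewrite EB, addK. reflexivity.
Qed.


Lemma iterN_shift {X : Type} (f : X -> X) k x : iterN (S k) f x = iterN k f (f x).
Proof. induction k; simpl in *; [reflexivity|]. rewrite IHk. reflexivity. Qed.

Lemma iterN_add {X : Type} (f : X -> X) a b x : iterN (a + b) f x = iterN a f (iterN b f x).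
Proof. induction a; simpl; [reflexivity|]. rewrite IHa. reflexivity. Qed.

Lemma iterN_fix {X : Type} (f : X -> X) z : f z = z -> forall k, iterN k f z = z.
Proof. intros E k; induction k; simpl; [reflexivity|]. rewrite IHk. exact E. Qed.

Lemma iterN_cancel {X : Type} (U Uinv : X -> X) : (forall x, U (Uinv x) = x) ->
  forall k x, iterN k U (iterN k Uinv x) = x.
Proof.
  intros HK k. induction k; intro x; [reflexivity|].
  rewrite iterN_shift. simpl. rewrite HK. apply IHk.
Qed.

Lemma iterN_add_morph {H : Hilbert} (f : H -> H) : (forall a b, f (hadd a b) = hadd (f a) (f b)) ->
  forall k a b, iterN k f (hadd a b) = hadd (iterN k f a) (iterN k f b).
Proof. intros Hf k; induction k; intros; simpl; [reflexivity|]. rewrite IHk, Hf. reflexivity. Qed.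

Lemma iterN_inner {H : Hilbert} (f : H -> H) : (forall a b, hinner (f a) (f b) = hinner a b) ->
  forall k a b, hinner (iterN k f a) (iterN k f b) = hinner a b.
Proof. intros Hf k; induction k; intros; simpl; [reflexivity|]. rewrite Hf, IHk. reflexivity. Qed.

Lemma zpow_negnat {X : Type} (U Uinv : X -> X) j x : zpow U Uinv (Z.opp (Z.of_nat j)) x = iterN j Uinv x.
Proof.
  destruct j; [reflexivity|]. simpl. rewrite SuccNat2Pos.id_succ. reflexivity.
Qed.

Lemma zpow_shift {X : Type} (U Uinv : X -> X) : (forall x, U (Uinv x) = x) ->
  forall k N y, (N >= Z.abs_nat k + 1)%nat -> exists m, (m >= 1)%nat /\ iterN N U (zpow U Uinv k y) = iterN m U y.
Proof.
  intros HK k N y HN. destruct k as [|p|p]; simpl in *.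
  - exists N. split; [lia|reflexivity].
  - exists (N + Pos.to_nat p)%nat. split; [lia|]. rewrite iterN_add. reflexivity.
  - exists (N - Pos.to_nat p)%nat. split; [lia|].
    replace N with ((N - Pos.to_nat p) + Pos.to_nat p)%nat at 1 by lia.
    rewrite iterN_add, iterN_cancel by exact HK. reflexivity.
Qed.

Lemma sub_add_cancel {H : Hilbert} (x a r : H) : hadd (hsub x (hadd a r)) a = hsub x r.
Proof.
  unfold hsub. rewrite opp_add, (h_addC (hopp a)), h_addA. exact (subK _ _).
Qed.

Lemma sub_addl {H : Hilbert} (a r1 r2 : H) : hsub (hadd a r1) r2 = hadd a (hsub r1 r2).
Proof. unfold hsub. rewrite h_addA. reflexivity. Qed.

Lemma span_psum {H : Hilbert} (Sx : H -> Prop) (f : nat -> H) : (forall j, Sx (f j)) ->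
  forall N, span H Sx (psum H f N).
Proof.
  intros Hf N. induction N as [|N [l [Fl El]]].
  - exists nil. split; [constructor|reflexivity].
  - exists ((Defs.C1, f N) :: l). split; [constructor; [apply Hf|exact Fl]|].
    simpl. rewrite El, h_scal1, h_addC. reflexivity.
Qed.

Lemma span_orth {H : Hilbert} (S : H -> Prop) r : (forall y, S y -> hinner y r = C0) ->
  forall v, cspan S v -> hinner v r = C0.
Proof.
  intros HS v Hv. apply inner_approx. intros eps He.
  destruct (Hv eps He) as [u [[l [Fl ->]] Hn]]. exists (lincomb H l). split; [|exact Hn].
  clear Hn. induction l as [|[c y] l IH]; simpl.
  - apply inner0l.
  - inversion Fl; subst. rewrite h_innerDl, h_innerZl, HS, IH by auto. cx.
Qed.


Theorem mainTheorem8 (H : Hilbert) (Hsep : separable H) (n : nat)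
  (dom : H -> Prop) (B : H -> H) (HB : in_Sn H n dom B)
  (w : Cx) (Hw : Cim w <> 0%R)
  (K : Hilbert) (iota : H -> K) (U Uinv : K -> K)
  (Hdil : minimal_unitary_dilation H K iota U Uinv (Vw H dom B w)) :
  let Pstar := proj (orth (cspan (fun y => exists (k : Z) (x : H),
                   kerBstar H dom B w x /\ y = zpow U Uinv k (iota x)))) in
  forall h : H,
    series_to (fun j : nat => zpow U Uinv (Z.opp (Z.of_nat j))
                                (iota (Pw H dom B w (iterN j (Vw H dom B w) h))))
              (hsub (iota h) (Pstar (iota h))).
Proof.
  intros Pstar h.
  destruct HB as [L [Sy [Cl [_ _]]]].
  destruct Hdil as [[[Ia [Is Ii]] [[Ua [Us [Ui [UK KU]]]] Dil]] _].
  pose proof L as [D0 [Da [Ds [Ba Bs]]]].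
  set (z := Cconj w).
  assert (Hz : Cim z <> 0) by (unfold z; simpl; lra).
  set (M := ran H dom B z).
  assert (HMc : closed_subspace M) by (apply ran_subspace; auto).
  assert (Msub : forall a b, M a -> M b -> M (hsub a b)) by (apply subspace_sub; exact HMc).
  set (Q := Qw H dom B w). set (P := Pw H dom B w). set (V := Vw H dom B w).
  assert (Qspec : forall x, M (Q x) /\ orth M (hsub x (Q x))).
  { intro x. apply proj_spec, proj_exists, HMc. }
  assert (QonM : forall u, M u -> Q u = u).
  { intros u Mu. apply proj_unique; auto. rewrite subvv. intros y _. apply inner0r. }
  assert (QonO : forall p, orth M p -> Q p = hzero).
  { intros p Op. apply proj_unique; auto. apply HMc. rewrite sub0r. exact Op. }
  assert (Pdef : forall x, P x = hsub x (Q x)) by reflexivity.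
  assert (Vdef : forall x, V x = bwB H dom B w (Q x)) by reflexivity.
  assert (bwspec : forall y, M y -> exists x, dom x /\ y = Tc B z x /\ bwB H dom B w y = Tc B w x).
  { intros y My. unfold bwB.
    pose proof (epsilon_spec (inhabits hzero) (fun x => dom x /\ y = hsub (B x) (hscal (Cconj w) x)) My) as [Dx Ex].
    eexists. split; [exact Dx|]. split; [exact Ex|]. reflexivity. }
  assert (bwnorm : forall y, M y -> nsq (bwB H dom B w y) = nsq y).
  { intros y My. destruct (bwspec y My) as [x [Dx [-> ->]]].
    rewrite (T_formula dom B Sy w x Dx), (T_formula dom B Sy z x Dx). unfold z. simpl. ring. }
  assert (M0 : M hzero) by apply HMc.
  assert (bw0 : bwB H dom B w hzero = hzero).
  { destruct (bwspec hzero M0) as [x [Dx [E0 ->]]].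
    pose proof (T_lower dom B Sy z x Dx) as Lw. rewrite <- E0, nsq0 in Lw.
    assert (Hp : 0 < Cim z * Cim z) by (apply Rsqr_pos_lt in Hz; exact Hz).
    pose proof (nsq_nonneg x).
    assert (nsq x = 0) by nra. apply nsq_zero in H1. subst x.
    unfold Tc. rewrite (lin_B0 dom B L), scalx0, subvv. reflexivity. }
  assert (Vorth : forall p, orth M p -> V p = hzero).
  { intros p Op. rewrite Vdef, QonO by exact Op. exact bw0. }
  assert (V0 : V hzero = hzero).
  { apply Vorth. intros y _. apply inner0r. }
  assert (Vnorm : forall x, nsq x = nsq (P x) + nsq (V x)).
  { intro x. destruct (Qspec x) as [MQ OQ].
    rewrite <- (subK x (Q x)) at 1. rewrite nsq_add, Vdef, bwnorm by exact MQ.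
    rewrite Pdef. rewrite (h_innerC (Q x)), OQ by exact MQ. simpl. ring. }
  assert (Uia : forall a b, Uinv (hadd a b) = hadd (Uinv a) (Uinv b)).
  { intros a b. rewrite <- (UK a), <- (UK b) at 1. rewrite <- Ua. apply KU. }
  assert (Uii : forall a b, hinner (Uinv a) (Uinv b) = hinner a b).
  { intros a b. rewrite <- Ui, !UK. reflexivity. }
  assert (nsq_iota : forall a, nsq (iota a) = nsq a) by (intro a; unfold nsq; rewrite Ii; reflexivity).
  assert (UQ : forall x, U (iota (Q x)) = iota (V x)).
  { intro x. destruct (Qspec x) as [MQ _]. set (u := Q x) in *.
    assert (Vu : V u = V x) by (rewrite !Vdef, (QonM u MQ); reflexivity).
    apply sub_eq0, nsq_zero. rewrite nsq_sub.
    assert (E1 : hinner (U (iota u)) (iota (V x)) = hinner (V u) (V x)) by exact (Dil 1%nat u (V x)).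
    rewrite E1, Vu. unfold nsq at 1. rewrite Ui. fold (nsq (iota u)). rewrite !nsq_iota.
    fold (nsq (V x)). rewrite Vdef, bwnorm by exact MQ. fold u. ring. }
  assert (iterV0 : forall k, iterN k V hzero = hzero) by (apply iterN_fix, V0).
  assert (DilO : forall p y m, orth M p -> (m >= 1)%nat -> hinner (iterN m U (iota p)) (iota y) = C0).
  { intros p y m Op Hm. rewrite Dil. destruct m as [|m]; [lia|].
    rewrite iterN_shift, Vorth, iterV0 by exact Op. apply inner0l. }
  set (hj := fun j => iterN j V h).
  set (rN := fun N => iterN N Uinv (iota (hj N))).
  set (aj := fun j : nat => zpow U Uinv (Z.opp (Z.of_nat j)) (iota (P (iterN j V h)))).
  assert (ajE : forall j, aj j = iterN j Uinv (iota (P (hj j)))) by (intro j; apply zpow_negnat).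
  assert (S1 : forall N, rN N = hadd (aj N) (rN (S N))).
  { intro N. unfold rN. rewrite ajE.
    assert (E : iota (hj N) = hadd (iota (P (hj N))) (Uinv (iota (hj (S N))))).
    { rewrite <- (subK (hj N) (Q (hj N))) at 1. rewrite Ia. f_equal.
      change (hj (S N)) with (V (hj N)). rewrite <- UQ, KU. reflexivity. }
    rewrite E, iterN_add_morph by exact Uia. rewrite (iterN_shift Uinv N). reflexivity. }
  assert (S2 : forall N, psum K aj N = hsub (iota h) (rN N)).
  { intro N. induction N as [|N IH].
    - simpl. unfold rN. simpl. symmetry. apply subvv.
    - simpl. rewrite IH, (S1 N). apply sub_add_cancel. }
  assert (S3 : forall N, nsq (rN N) = nsq (hj N)).
  { intro N. unfold rN, nsq. rewrite iterN_inner by exact Uii. rewrite Ii. reflexivity. }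
  assert (S5 : forall j M', (j < M')%nat -> hinner (aj j) (rN M') = C0).
  { intros j M' Hj. rewrite ajE. unfold rN.
    replace M' with (j + (M' - j))%nat by lia. rewrite iterN_add, iterN_inner by exact Uii.
    set (m := (M' - j)%nat). set (y := hj (j + m)%nat).
    rewrite <- (iterN_inner U Ui m). rewrite iterN_cancel by exact UK.
    apply DilO; [|lia]. rewrite Pdef. apply (proj2 (Qspec (hj j))). }
  assert (S6 : forall d N, hinner (hsub (rN N) (rN (N + d)%nat)) (rN (N + d)%nat) = C0).
  { intro d. induction d as [|d IH]; intro N.
    - rewrite Nat.add_0_r, subvv. apply inner0l.
    - rewrite (S1 N) at 1. rewrite sub_addl, h_innerDl, S5 by lia.
      replace (N + S d)%nat with (S N + d)%nat by lia. rewrite IH. cx. }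
  set (s := fun N => nsq (hj N)).
  assert (S7 : forall d N, nsq (hsub (rN N) (rN (N + d)%nat)) = s N - s (N + d)%nat).
  { intros d N. unfold s. rewrite <- !S3.
    rewrite <- (subK (rN N) (rN (N + d)%nat)) at 2. rewrite nsq_add, S6. simpl. ring. }
  assert (Sdec : Un_decreasing s).
  { intro k. unfold s. rewrite (Vnorm (hj k)). pose proof (nsq_nonneg (P (hj k))).
    change (hj (S k)) with (V (hj k)). lra. }
  assert (Slb : has_lb s).
  { exists 0. intros x [i ->]. unfold opp_seq, s. pose proof (nsq_nonneg (hj i)). lra. }
  pose proof (CV_Cauchy s (decreasing_cv s Sdec Slb)) as SC.
  assert (Rc : cauchyq rN).
  { intros eps He. destruct (SC eps He) as [N HN]. exists N. intros m k Hm Hk.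
    pose proof (HN m k Hm Hk) as Hd. unfold Rdist in Hd.
    destruct (le_lt_dec m k) as [Hmk|Hmk].
    - replace k with (m + (k - m))%nat by lia. rewrite S7.
      replace (m + (k - m))%nat with k by lia. eapply Rle_lt_trans; [apply Rle_abs|exact Hd].
    - rewrite nsq_sub_sym. replace m with (k + (m - k))%nat by lia. rewrite S7.
      replace (k + (m - k))%nat with m by lia. rewrite Rabs_minus_sym in Hd.
      eapply Rle_lt_trans; [apply Rle_abs|exact Hd]. }
  destruct (complete rN Rc) as [r Hr].
  set (S0 := fun y => exists (k : Z) (x : H), kerBstar H dom B w x /\ y = zpow U Uinv k (iota x)).
  assert (Rorth : orth (cspan S0) r).
  { intros v Hv. apply (span_orth S0 r); [|exact Hv].
    intros y [k [x [Ox ->]]].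
    apply (inner_lim _ rN r (Z.abs_nat k + 1)); [|exact Hr].
    intros N HN. unfold rN.
    rewrite <- (iterN_inner U Ui N), iterN_cancel by exact UK.
    destruct (zpow_shift U Uinv UK k N (iota x) HN) as [m [Hm ->]].
    apply DilO; [exact Ox|exact Hm]. }
  set (sv := hsub (iota h) r).
  assert (Cps : convq (psum K aj) sv).
  { intros eps He. destruct (Hr eps He) as [N HN]. exists N. intros m Hm.
    rewrite S2. unfold sv. rewrite sub_sub_same, nsq_sub_sym. apply HN, Hm. }
  assert (Svs : cspan S0 sv).
  { intros eps He. destruct (convq_conv _ _ Cps eps He) as [N HN].
    exists (psum K aj N). split.
    - apply span_psum. intro j. exists (Z.opp (Z.of_nat j)), (P (iterN j V h)). split; [|reflexivity].
      rewrite Pdef. apply (proj2 (Qspec (iterN j V h))).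
    - rewrite hnorm_sub_sym. apply HN. lia. }
  assert (Pr : Pstar (iota h) = r).
  { unfold Pstar. fold S0. apply proj_unique.
    - intros a b. apply orth_sub.
    - exact Rorth.
    - intros m Hm. fold sv. rewrite h_innerC, (Hm sv Svs). cx. }
  unfold series_to. rewrite Pr. fold sv. apply convq_conv. exact Cps.
Qed.
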